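(* For every integer $n\ge0$ and every real $x$, $$x\,\mathfrak{C}_n'(x)=\sum_{k=0}^{n-1}\binom nk\mathfrak{C}_k(x)\,\mathfrak{C}_{n-k}(x).$$
   Context: For $n\ge1$ the central factorial is $x^{[n]}=x\,(x+\tfrac n2-1)(x+\tfrac n2-2)\cdots(x-\tfrac n2+1)$ (a product of $n$ factors), and $x^{[0]}=1$. The central factorial numbers of the second kind $T(n,k)$ ($0\le k\le n$) are defined by $x^n=\sum_{k=0}^n T(n,k)\,x^{[k]}$; equivalently $T(n,k)=\frac1{k!}\sum_{j=0}^k(-1)^j\binom kj\left(\frac k2-j\right)^n$, and $T(n,k)=0$ for $k>n$. The $n$th central Fubini-like polynomial is $\mathfrak{C}_n(x)=\sum_{k=0}^n k!\,T(n,k)\,x^k$. *)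

(* Defs.v *)
From HB Require Import structures.
From mathcomp Require Import all_boot all_order all_algebra.
Set Implicit Arguments. Unset Strict Implicit. Unset Printing Implicit Defensive.
Import Order.TTheory GRing.Theory Num.Theory.
Local Open Scope ring_scope.

(* Central factorial numbers of the second kind, via the explicit formula
   T(n,k) = 1/k! * sum_{j=0}^k (-1)^j C(k,j) (k/2 - j)^n. *)
Definition cfT (R : realFieldType) (n k : nat) : R :=
  (k`!%:R)^-1 *
  \sum_(j < k.+1) (-1) ^+ j * ('C(k, j))%:R * ((k%:R / 2%:R - j%:R) ^+ n).

Definition cfub (R : realFieldType) (n : nat) : {poly R} :=
  \sum_(k < n.+1) ((k`!%:R * cfT R n k) *: 'X^k).

(* Main.v *)
Require Import Defs.
From HB Require Import structures.
From mathcomp Require Import all_boot all_order all_algebra.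
From mathcomp Require Import ring.
Import Order.TTheory GRing.Theory Num.Theory.
Local Open Scope ring_scope.

Section S.
Variable R : realFieldType.

Definition Dop (k : nat) (f : nat -> R) (m : nat) : R :=
  \sum_(l < k.+1) (-1) ^+ l * ('C(k, l))%:R * f (l + m)%N.

Lemma Dop_ext k f g m : (forall l, f l = g l) -> Dop k f m = Dop k g m.
Proof. by move=> H; apply: eq_bigr => l _; rewrite H. Qed.

Lemma Dop0 f m : Dop 0 f m = f m.
Proof. by rewrite /Dop big_ord1 /= expr0 mul1r mul1r. Qed.

Lemma DopS k f m : Dop k.+1 f m = Dop k f m - Dop k f m.+1.
Proof.
rewrite /Dop big_ord_recl /= expr0 bin0 mul1r mul1r.
under eq_bigr => l _ do rewrite /bump /= add1n binS natrD mulrDr mulrDl exprS.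
rewrite big_split /= addrA; congr (_ + _)%R.
  rewrite [in RHS]big_ord_recl /= expr0 bin0 mul1r mul1r; congr (_ + _)%R.
  rewrite big_ord_recr /= bin_small // mulr0 mul0r addr0.
  by apply: eq_bigr => l _; rewrite /bump /= add1n exprS.
rewrite -sumrN; apply: eq_bigr => l _.
by rewrite addSnnS mulN1r !mulNr.
Qed.

Lemma DopB k f g m : Dop k (fun l => f l - g l) m = Dop k f m - Dop k g m.
Proof. by rewrite /Dop -sumrB; apply: eq_bigr => l _; rewrite mulrBr. Qed.

Lemma Dop_comp i j f m : Dop j (Dop i f) m = Dop (i + j) f m.
Proof.
elim: j m => [|j IH] m; first by rewrite Dop0 addn0.
by rewrite DopS !IH addnS DopS.
Qed.

Lemma Dop_vanish k (p : {poly R}) m :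
  (size p <= k)%N -> Dop k (fun l => p.[l%:R]) m = 0.
Proof.
elim: k p m => [|k IH] p m.
  by rewrite size_poly_leq0 => /eqP ->; rewrite Dop0 horner0.
move=> Hp.
have -> : Dop k.+1 (fun l => p.[l%:R]) m =
   Dop k (fun l => (p - (p \Po ('X + 1))).[l%:R]) m.
  rewrite DopS /Dop -sumrB; apply: eq_bigr => l _; rewrite -mulrBr; congr (_ * _)%R.
  rewrite hornerD hornerN horner_comp hornerD hornerX hornerC addnS. by rewrite -natr1.
apply: IH.
have s2 : size ('X + 1 : {poly R}) = 2%N by rewrite -polyC1 size_XaddC.
apply/leq_sizeP => j Hj.
rewrite coefB.
have Hc : size (p \Po ('X + 1)) = size p by rewrite size_comp_poly2.
have Hp' := Hp; have Hc' : (size (p \Po ('X + 1)) <= k.+1)%N by rewrite Hc.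
move/leq_sizeP: Hp' => Hp'; move/leq_sizeP: Hc' => Hc'.
case: (ltnP k j) => Hkj.
  by rewrite Hp' // Hc' // subr0.
have -> : j = k by apply/eqP; rewrite eqn_leq Hj Hkj.
case: (ltnP (size p) k.+1) => Hs.
  have Hs' : (size p <= k)%N by [].
  have Hs'' : (size (p \Po ('X + 1)) <= k)%N by rewrite Hc.
  move/leq_sizeP: Hs' => Hs'; move/leq_sizeP: Hs'' => Hs''.
  by rewrite Hs' // Hs'' // subr0.
have Hsz : size p = k.+1 by apply/eqP; rewrite eqn_leq Hp Hs.
have e1 : p`_k = lead_coef p by rewrite /lead_coef Hsz.
have e2 : (p \Po ('X + 1))`_k = lead_coef (p \Po ('X + 1)).
  by rewrite /lead_coef size_comp_poly2 // Hsz.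
rewrite e1 e2 lead_coef_comp ?s2 //.
have -> : lead_coef ('X + 1 : {poly R}) = 1.
  by rewrite -polyC1 lead_coefXaddC.
by rewrite expr1n mulr1 subrr.
Qed.


Definition aa (n k : nat) : R :=
  Dop k (fun l => (k%:R / 2%:R - l%:R) ^+ n) 0.

Lemma fact_cfT n k : k`!%:R * cfT R n k = aa n k.
Proof.
rewrite /cfT mulrA mulfV ?mul1r; last by rewrite pnatr_eq0 -lt0n fact_gt0.
by apply: eq_bigr => l _; rewrite addn0.
Qed.

Lemma aa_vanish n k : (n < k)%N -> aa n k = 0.
Proof.
move=> Hnk.
rewrite /aa (@Dop_ext _ _ (fun l => (((k%:R / 2%:R)%:P - 'X) ^+ n).[l%:R])).
  apply: Dop_vanish; apply: leq_trans (size_poly_exp_leq _ _) _.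
  by rewrite -opprB size_opp size_XsubC /= mul1n.
by move=> l; rewrite horner_exp hornerD hornerN hornerC hornerX.
Qed.

Lemma aa0 j : aa 0 j = (j == 0%N)%:R.
Proof.
case: j => [|j]; first by rewrite /aa Dop0 expr0.
rewrite /= /aa (@Dop_ext _ _ (fun l => (1%:P : {poly R}).[l%:R])).
  by apply: Dop_vanish; rewrite size_polyC oner_neq0.
by move=> l; rewrite hornerC expr0.
Qed.

Lemma conv n i j :
  \sum_(k < n.+1) ('C(n, k))%:R * aa k i * aa (n - k) j = aa n (i + j).
Proof.
rewrite /aa -Dop_comp /Dop.
transitivity (\sum_(k < n.+1) \sum_(l < i.+1) \sum_(l' < j.+1)
   (('C(n, k))%:R * ((-1) ^+ l * ('C(i, l))%:R * (i%:R / 2%:R - (l + 0)%N%:R) ^+ k)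
     * ((-1) ^+ l' * ('C(j, l'))%:R * (j%:R / 2%:R - (l' + 0)%N%:R) ^+ (n - k)) : R)).
  apply: eq_bigr => k _; rewrite [_ * (\sum_(l < i.+1) _)]mulr_sumr mulr_suml; apply: eq_bigr => l _.
  by rewrite mulr_sumr.
rewrite exchange_big /=.
under eq_bigr => l _ do rewrite exchange_big /=.
rewrite exchange_big /=; apply: eq_bigr => l' _; rewrite mulr_sumr.
apply: eq_bigr => l _.
set X := (i%:R / 2%:R - (l + 0)%N%:R : R).
set Y := (j%:R / 2%:R - (l' + 0)%N%:R : R).
have -> : ((i + j)%:R / 2%:R - (l + (l' + 0))%N%:R : R) = Y + X.
  by rewrite /X /Y !addn0 !natrD mulrDl; ring.
rewrite exprDn !mulr_sumr; apply: eq_bigr => k _.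
rewrite -mulr_natl; ring.
Qed.


Lemma cfub_coef n m : (cfub R n)`_m = aa n m.
Proof.
have -> : cfub R n = \poly_(k < n.+1) aa n k.
  by rewrite /cfub poly_def; apply: eq_bigr => k _; rewrite fact_cfT.
by rewrite coef_poly; case: ltnP => // H; rewrite aa_vanish.
Qed.

Lemma main_poly n :
  'X * (cfub R n)^`() =
  \sum_(k < n) ('C(n, k))%:R *: (cfub R k * cfub R (n - k)).
Proof.
apply/polyP => m.
rewrite coefXM coef_sum.
under eq_bigr => k _ do rewrite coefZ coefM.
under eq_bigr => k _ do under eq_bigr => l _ do rewrite !cfub_coef.
under eq_bigr => k _ do rewrite mulr_sumr.
rewrite exchange_big /=.
have H : forall l : nat, (l <= m)%N ->
  \sum_(k < n) 'C(n, k)%:R * (aa k l * aa (n - k) (m - l)) =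
  aa n m - aa n l * aa 0 (m - l).
  move=> l Hl.
  rewrite -{2}(subnKC Hl) -(conv n l (m - l)) big_ord_recr /= subnn binn.
  rewrite mul1r addrK; apply: eq_bigr => k _; ring.
under eq_bigr => l _ do rewrite H ?(ltnSE (ltn_ord l)) //.
rewrite sumrB sumr_const card_ord big_ord_recr /= subnn aa0 /= mulr1.
rewrite big1 => [|l _]; last first.
  by rewrite aa0 subn_eq0 leqNgt ltn_ord /= mulr0.
rewrite add0r.
case: m H => [|m] H /=; first by rewrite subrr.
by rewrite coef_deriv cfub_coef mulrSr addrK.
Qed.


End S.

Theorem corollary6 (R : realFieldType) (n : nat) (x : R) :
  x * ((cfub R n)^`()).[x] =
  \sum_(k < n) ('C(n, k))%:R * (cfub R k).[x] * (cfub R (n - k)).[x].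
Proof.
have := congr1 (fun p => p.[x]) (main_poly R n) => /=.
rewrite hornerM hornerX horner_sum => ->.
by apply: eq_bigr => k _; rewrite hornerZ hornerM mulrA.
Qed.
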